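(* If $G$ is a graph with $\delta(G)\ge 2$, then $$\mathrm{TC}_2(G)\le \max\Big\{\Delta(G),\ \Big\lfloor\tfrac{\delta(G)}{2}\Big\rfloor(\Delta(G)-4)+\delta(G)\Big\}.$$ Moreover, this bound is sharp, i.e., there exist graphs attaining equality.
   Context: All graphs are finite, simple and connected. $N(v)$ denotes the open neighborhood of $v$; $\delta(G)$ and $\Delta(G)$ are minimum and maximum degree. A set $S\subseteq V(G)$ is a total $2$-dominating set if $|N(v)\cap S|\ge 2$ for every $v\in V(G)$. Two disjoint sets $U,W\subseteq V(G)$ form a total $2$-coalition if neither is a total $2$-dominating set but $U\cup W$ is. A total $2$-coalition partition of $G$ is a partition $\Omega$ of $V(G)$ in which every set forms a total $2$-coalition with some other set of $\Omega$; $\mathrm{TC}_2(G)$ is the maximum cardinality of such a partition. *)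

(* Defs.v *)
From mathcomp Require Import all_boot all_order all_algebra.
Set Implicit Arguments. Unset Strict Implicit. Unset Printing Implicit Defensive.
Import Order.TTheory GRing.Theory Num.Theory.

Definition simple_connected_graph (T : finType) (e : rel T) : Prop :=
  symmetric e /\ irreflexive e /\ (forall x y : T, connect e x y).

Definition nbhd (T : finType) (e : rel T) (v : T) : {set T} := [set u | e v u].
Definition deg (T : finType) (e : rel T) (v : T) : nat := #|nbhd e v|.

(* maximum degree; minimum degree (the seed #|T| exceeds every degree of a
   loopless graph, so for a nonempty graph this is the true minimum) *)
Definition maxdeg (T : finType) (e : rel T) : nat := \max_(v : T) deg e v.
Definition mindeg (T : finType) (e : rel T) : nat :=
  \big[minn/#|T|]_(v : T) deg e v.

Definition total2dom (T : finType) (e : rel T) (S : {set T}) : bool :=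
  [forall v : T, 2 <= #|nbhd e v :&: S|].

Definition total2coal (T : finType) (e : rel T) (U W : {set T}) : bool :=
  [&& [disjoint U & W], ~~ total2dom e U, ~~ total2dom e W &
      total2dom e (U :|: W)].

Definition total2coal_partition (T : finType) (e : rel T)
    (P : {set {set T}}) : bool :=
  partition P [set: T] &&
  [forall U in P, exists W in P, (W != U) && total2coal e U W].

(* TC_2(G): maximum cardinality of a total 2-coalition partition
   (0 if none exists) *)
Definition TC2 (T : finType) (e : rel T) : nat :=
  \max_(P : {set {set T}} | total2coal_partition e P) #|P|.

Local Open Scope ring_scope.
Definition tc2_bound (T : finType) (e : rel T) : int :=
  Order.max (maxdeg e)%:Z
    (((mindeg e)./2)%:Z * ((maxdeg e)%:Z - 4) + (mindeg e)%:Z)%R.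

(* Main.v *)
Require Import Defs.
From mathcomp Require Import all_boot all_order all_algebra.
From mathcomp Require Import zify.
Import Order.TTheory GRing.Theory Num.Theory.

Lemma arithA b s r D d : 2*b + s <= d -> d <= D -> r <= b*(D-3) ->
  b + s + r <= maxn D (d./2 * D + d - 4 * d./2).
Proof.
move=> h1 h2 h3; have hd := odd_double_half d; rewrite -muln2 in hd.
move: hd; set h := d./2 => hd.
have eo : odd d <= 1 by case: (odd d).
move: eo hd; set o := odd d => eo hd.
rewrite leq_max; case: (leqP D 4) => HD; apply/orP; [left|right]; first nia.
have hb : b <= h by lia.
have : 0 <= (h - b) * (D - 4) by [].
nia.
Qed.

Lemma arithB b t D d : 2*b <= d -> d <= D -> t + 2 <= D + b ->
  t <= maxn D (d./2 * D + d - 4 * d./2).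
Proof.
move=> h1 h2 h3; have hd := odd_double_half d; rewrite -muln2 in hd.
move: hd; set h := d./2 => hd.
have eo : odd d <= 1 by case: (odd d).
move: eo hd; set o := odd d => eo hd.
rewrite leq_max; case: (leqP b 2) => Hb; apply/orP; [left; lia|right].
have hb : b <= h by lia.
have : 3 * (D - 4) <= h * (D - 4) by apply: leq_mul; lia.
nia.
Qed.

Lemma card_ind (I : finType) (A : {set I}) (p : pred I) :
  \sum_(i in A) (p i : nat) = #|[set i in A | p i]|.
Proof.
rewrite -sum1_card big_mkcond /= [RHS]big_mkcond /=.
by apply: eq_bigr => i _; rewrite inE; case: (i \in A); case: (p i).
Qed.

Section Abstract.
Variables (V I : finType) (P : {set I}) (f : I -> I) (n : V -> I -> nat) (v : V) (D d : nat).
Hypothesis Hsum : forall u, \sum_(S in P) n u S <= D.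
Hypothesis Hv : \sum_(S in P) n v S <= d.
Hypothesis HfP : forall S, S \in P -> f S \in P.
Hypothesis Hf2 : forall S u, S \in P -> 2 <= n u S + n u (f S).
Hypothesis Hnd : forall S, S \in P -> exists u, n u S <= 1.
Hypothesis Hd : 2 <= d.
Hypothesis HdD : d <= D.

Lemma abstract_bound : #|P| <= maxn D (d./2 * D + d - 4 * d./2).
Proof.
pose B := [set S in P | 2 <= n v S].
pose Sm := [set S in P | n v S == 1].
pose NM := [set S in P | n v S == 0].
have cardP : #|P| = #|B| + #|Sm| + #|NM|.
  rewrite -!card_ind -!big_split /= -sum1_card.
  by apply: eq_bigr => S _; case: (n v S) => [|[|k]].
have bs : 2 * #|B| + #|Sm| <= d.
  apply: leq_trans Hv; rewrite -!card_ind big_distrr -big_split /=.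
  by apply: leq_sum => S _; case: (n v S) => [|[|k]].
have fNM : forall X, X \in NM -> f X \in B.
  move=> X; rewrite !inE => /andP[XP /eqP a0]; rewrite HfP //=.
  by have := Hf2 _ v XP; rewrite a0.
have toB : forall S, S \in P -> n v (f S) = 0 -> S \in B.
  by move=> S SP h; have := Hf2 _ v SP; rewrite h addn0 inE SP.
case: (boolP [forall Y in B, #|[set X in NM | f X == Y]| + 3 <= D]) => [HA|HB].
  have rle : #|NM| <= #|B| * (D - 3).
    rewrite -sum1_card (partition_big f (mem B)) /=; last first.
      by move=> X XN; exact: fNM.
    rewrite -sum_nat_const; apply: leq_sum => Y YB.
    have := (forall_inP HA) Y YB.
    rewrite (eq_bigl (mem [set X in NM | f X == Y])) ?sum1_card; first lia.
    by move=> X; rewrite !inE.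
  by rewrite cardP; apply: arithA.
move/forall_inPn: HB => [Y YB]; rewrite -ltnNge => HY.
have YP : Y \in P by move: YB; rewrite inE => /andP[].
have aY : 2 <= n v Y by move: YB; rewrite inE => /andP[].
have [w Hw] := Hnd _ YP.
move: HY; set Q := [set X in NM | f X == Y] => HY.
pose O := P :\: (Y |: Q).
have QP : Q \subset P by apply/subsetP => X; rewrite !inE => /andP[/andP[-> _] _].
have YQ : Y \notin Q.
  rewrite !inE; apply/negP => /andP[/andP[_ /eqP h] _]; by rewrite h in aY.
have PYQ : P :&: (Y |: Q) = Y |: Q by apply/setIidPr; rewrite subUset sub1set YP QP.
have cardP2 : #|P| = 1 + #|Q| + #|O|.
  by rewrite -(cardsID (Y |: Q) P) PYQ cardsU1 YQ.
have sumw : n w Y + \sum_(S in Q) n w S + \sum_(S in O) n w S <= D.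
  by have := Hsum w; rewrite (big_setID (Y |: Q)) /= PYQ big_setU1 //= addnA.
have QY : forall X, X \in Q -> f X = Y by move=> X; rewrite inE => /andP[_ /eqP].
have QNM : forall X, X \in Q -> n v X = 0.
  by move=> X; rewrite !inE => /andP[/andP[_ h] _]; apply/eqP.
have QinP : forall X, X \in Q -> X \in P by move=> X XQ; exact: (subsetP QP).
have Qw : forall X, X \in Q -> 2 <= n w X + n w Y.
  by move=> X XQ; have := Hf2 _ w (QinP X XQ); rewrite QY.
have inPcase : forall S, S \in P -> S != Y -> S \notin O -> S \in Q.
  move=> S SP SY; rewrite in_setD in_setU1 SP andbT negbK => /orP[/eqP SY'|//].
  by rewrite SY' eqxx in SY.
have OP : forall S, S \in O -> S \in P by move=> S; rewrite in_setD => /andP[].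
have OY : forall S, S \in O -> S != Y.
  by move=> S; rewrite in_setD in_setU1 negb_or => /andP[/andP[]].
have sumO_ge : forall S, S \in O -> n w S <= \sum_(S in O) n w S.
  by move=> S SO; rewrite (big_setD1 S) //= leq_addr.
have sumQ_ge : #|Q| * (2 - n w Y) <= \sum_(X in Q) n w X.
  rewrite -sum_nat_const; apply: leq_sum => X XQ; have := Qw X XQ; lia.
have bpos : 0 < #|B| by apply/card_gt0P; exists Y.
have : n w Y = 0 \/ n w Y = 1 by lia.
case => HwY.
- rewrite HwY subn0 in sumQ_ge.
  case: (ltnP #|Q| 2) => Hp.
  + have b1 : #|B| <= 1 by lia.
    have BY : forall Z, Z \in B -> Z = Y.
      by move=> Z ZB; move/card_le1_eqP: b1 => /(_ Z Y ZB YB).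
    have NMQ : NM \subset Q.
      apply/subsetP => X XN; rewrite inE XN /=; apply/eqP; exact: BY (fNM X XN).
    have := subset_leq_card NMQ => hNM.
    apply: (@leq_trans D); [lia | exact: leq_maxl].
  + have sO0 : \sum_(S in O) n w S = 0 by lia.
    have D4 : D = 4 by lia.
    have sub : P \subset Q :|: B.
      apply/subsetP => S SP; rewrite in_setU.
      case: (boolP (S \in Q)) => SQ //=.
      have wS : n w S = 0.
        case: (eqVneq S Y) => [->//|SY].
        have SO : S \in O by rewrite in_setD in_setU1 negb_or SY SQ SP.
        by have := sumO_ge S SO; rewrite sO0; lia.
      have w2 : 2 <= n w (f S) by have := Hf2 _ w SP; rewrite wS.
      apply (toB _ SP); apply: QNM; apply: inPcase; first exact: HfP _ SP.
        by apply/eqP => h; rewrite h HwY in w2.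
      apply/negP => fO; have := sumO_ge _ fO; rewrite sO0; lia.
    have := subset_leq_card sub; rewrite cardsU => h.
    apply: (@leq_trans D); [lia | exact: leq_maxl].
- rewrite HwY in sumQ_ge sumw; rewrite muln1 in sumQ_ge.
  case: (boolP [exists S in O, n w S == 0]) => [/exists_inP [S0 S0O /eqP h0] | Hno].
  + have S0P := OP S0 S0O.
    have w2 : 2 <= n w (f S0) by have := Hf2 _ w S0P; rewrite h0.
    have gQ : f S0 \in Q.
      apply: inPcase; first exact: HfP _ S0P.
        by apply/eqP => h; rewrite h HwY in w2.
      apply/negP => fO; have := sumO_ge _ fO; lia.
    have sQ1 : #|Q| + 1 <= \sum_(X in Q) n w X.
      rewrite (big_setD1 (f S0)) //= (cardsD1 (f S0) Q) gQ.
      have : #|Q :\ f S0| * 1 <= \sum_(X in Q :\ f S0) n w X.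
        rewrite -sum_nat_const; apply: leq_sum => X; rewrite in_setD1 => /andP[_ XQ].
        have := Qw X XQ; lia.
      lia.
    have sO0 : \sum_(S in O) n w S = 0 by lia.
    have OB : O \subset B :\ Y.
      apply/subsetP => S SO; rewrite in_setD1 OY //=.
      have SP := OP S SO.
      have wS : n w S = 0 by have := sumO_ge S SO; rewrite sO0; lia.
      have w2' : 2 <= n w (f S) by have := Hf2 _ w SP; rewrite wS.
      apply (toB _ SP); apply: QNM; apply: inPcase; first exact: HfP _ SP.
        by apply/eqP => h; rewrite h HwY in w2'.
      apply/negP => fO; have := sumO_ge _ fO; rewrite sO0; lia.
    have := subset_leq_card OB; have := cardsD1 Y B; rewrite YB => hB hO.
    apply: (@arithB #|B|); lia.
  + have sO : #|O| * 1 <= \sum_(S in O) n w S.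
      rewrite -sum_nat_const; apply: leq_sum => S SO.
      have := (exists_inPn Hno) S SO; case: (n w S) => //.
    apply: (@leq_trans D); [lia | exact: leq_maxl].
Qed.
End Abstract.

Lemma sum_cap_le (T : finType) (P : {set {set T}}) (A : {set T}) :
  trivIset P -> \sum_(S in P) #|A :&: S| <= #|A|.
Proof.
move=> tP.
have -> : \sum_(S in P) #|A :&: S| = \sum_(S in P) \sum_(x in A) (x \in S : nat).
  apply: eq_bigr => S _; rewrite card_ind; apply: eq_card => x; by rewrite !inE.
rewrite exchange_big /= -[X in _ <= X]sum1_card; apply: leq_sum => x xA.
case: (boolP [exists S in P, x \in S]) => [/exists_inP [S0 S0P xS0]|].
  rewrite (bigD1 S0) //= xS0 big1 // => S /andP [SP SS0].
  by rewrite (disjointFr (trivIsetP tP S0 S S0P SP _) xS0) // eq_sym.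
move/exists_inPn => H; rewrite big1 // => S SP; by rewrite (negbTE (H S SP)).
Qed.

Lemma bigmin_le (I : eqType) (s : seq I) x0 (F : I -> nat) i :
  i \in s -> \big[minn/x0]_(v <- s) F v <= F i.
Proof.
elim: s => // y s IH; rewrite inE big_cons => /orP[/eqP->|/IH h].
  exact: geq_minl.
exact: leq_trans (geq_minr _ _) h.
Qed.

Lemma bigmin_ex (I : eqType) (s : seq I) x0 (F : I -> nat) :
  \big[minn/x0]_(v <- s) F v = x0 \/
  exists2 u, u \in s & \big[minn/x0]_(v <- s) F v = F u.
Proof.
elim: s => [|y s IH]; first by left; rewrite big_nil.
rewrite big_cons; case: (leqP (F y) (\big[minn/x0]_(v <- s) F v)) => h.
  right; exists y; first by rewrite inE eqxx.
  by [].
 case: IH => [->|[u us ->]]; first by left.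
by right; exists u; rewrite // inE us orbT.
Qed.

Lemma deg_lt (T : finType) (e : rel T) : irreflexive e -> forall v, deg e v < #|T|.
Proof.
move=> irr v; rewrite /deg.
have : nbhd e v \subset [set~ v].
  apply/subsetP => u; rewrite !inE => evu; apply/eqP => uv.
  by rewrite uv irr in evu.
move/subset_leq_card; rewrite cardsC1.
have : 0 < #|T| by apply/card_gt0P; exists v.
lia.
Qed.

Lemma mindeg_facts (T : finType) (e : rel T) : irreflexive e -> 2 <= mindeg e ->
  (forall u, mindeg e <= deg e u) /\ exists v, deg e v = mindeg e.
Proof.
move=> irr H2.
have Hle : forall u, mindeg e <= deg e u.
  move=> u; rewrite /mindeg; apply: bigmin_le; exact: mem_index_enum.
split => //.
case: (@bigmin_ex _ (index_enum T) #|T| (deg e)) => [h|[u _ h]].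
  have : 0 < #|T|.
    move: H2; rewrite /mindeg; rewrite h; lia.
  move/card_gt0P => [v0 _].
  have := Hle v0; have := @deg_lt _ _ irr v0; rewrite /mindeg h; lia.
by exists u; rewrite /mindeg h.
Qed.


Definition eK3 : rel 'I_3 := fun x y => x != y.

Lemma K3_graph : simple_connected_graph eK3.
Proof.
split; first by move=> x y; rewrite /eK3 eq_sym.
split; first by move=> x; rewrite /eK3 eqxx.
move=> x y; case: (eqVneq x y) => [->|xy]; first exact: connect0.
by apply: connect1.
Qed.

Lemma K3_nb v : nbhd eK3 v = [set~ v].
Proof. by apply/setP => u; rewrite !inE /eK3 eq_sym. Qed.

Lemma K3_deg v : deg eK3 v = 2.
Proof. by rewrite /deg K3_nb cardsC1 card_ord. Qed.

Lemma K3_mindeg : mindeg eK3 = 2.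
Proof.
by rewrite /mindeg (eq_bigr (fun _ => 2)) ?card_ord ?big_const_ord // => v _; rewrite K3_deg.
Qed.

Lemma K3_maxdeg : maxdeg eK3 = 2.
Proof.
by rewrite /maxdeg (eq_bigr (fun _ => 2)) ?big_const_ord // => v _; rewrite K3_deg.
Qed.

Definition x0 : 'I_3 := @Ordinal 3 0 isT.
Definition x1 : 'I_3 := @Ordinal 3 1 isT.
Definition x2 : 'I_3 := @Ordinal 3 2 isT.

Lemma I3_cases (x : 'I_3) : x = x0 \/ x = x1 \/ x = x2.
Proof.
case: x => [[|[|[|m]]] Hm]; [left|right;left|right;right|done]; exact: val_inj.
Qed.

Definition A0 : {set 'I_3} := [set x0].
Definition W0 : {set 'I_3} := [set x1; x2].

Lemma AW_T : A0 :|: W0 = setT.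
Proof. by apply/setP => x; case: (I3_cases x) => [->|[->|->]]; rewrite !inE. Qed.

Lemma AW_dis : [disjoint A0 & W0].
Proof. by rewrite disjoints1 !inE. Qed.

Lemma AW_neq : A0 != W0.
Proof. by apply/eqP => /setP /(_ x0); rewrite !inE. Qed.

Lemma t2d_T : total2dom eK3 setT.
Proof. by apply/forallP => v; rewrite setIT K3_nb cardsC1 card_ord. Qed.

Lemma nt2d_A : ~~ total2dom eK3 A0.
Proof.
apply/forallPn; exists x0; rewrite K3_nb.
rewrite (_ : [set~ x0] :&: A0 = set0) ?cards0 //.
by apply/setP => x; case: (I3_cases x) => [->|[->|->]]; rewrite !inE.
Qed.

Lemma nt2d_W : ~~ total2dom eK3 W0.
Proof.
apply/forallPn; exists x1; rewrite K3_nb.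
rewrite (_ : [set~ x1] :&: W0 = [set x2]) ?cards1 //.
by apply/setP => x; case: (I3_cases x) => [->|[->|->]]; rewrite !inE.
Qed.

Definition P0 : {set {set 'I_3}} := [set A0; W0].

Lemma P0_ok : total2coal_partition eK3 P0.
Proof.
apply/andP; split.
  apply/and3P; split.
  - apply/eqP/setP => x; rewrite inE; apply/bigcupP.
    case: (I3_cases x) => [->|[->|->]].
    + by exists A0; rewrite !inE ?eqxx.
    + by exists W0; rewrite !inE ?eqxx ?orbT.
    + by exists W0; rewrite !inE ?eqxx ?orbT.
  - have [] := @trivIsetU1 _ A0 [set W0].
    + by move=> B; rewrite inE => /eqP ->; exact: AW_dis.
    + exact: trivIset1.
    + rewrite inE; apply/eqP => /setP /(_ x1); by rewrite !inE.
    + by [].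
  - rewrite !inE negb_or; apply/andP; split; apply/eqP.
    + by move=> /setP /(_ x0); rewrite !inE.
    + by move=> /setP /(_ x1); rewrite !inE.
apply/forall_inP => U; rewrite !inE => /orP [/eqP ->|/eqP ->].
  apply/exists_inP; exists W0; first by rewrite !inE eqxx orbT.
  rewrite eq_sym AW_neq /total2coal AW_dis nt2d_A nt2d_W AW_T t2d_T.
  by [].
apply/exists_inP; exists A0; first by rewrite !inE eqxx.
rewrite AW_neq /total2coal disjoint_sym AW_dis nt2d_A nt2d_W setUC AW_T t2d_T.
by [].
Qed.

Lemma P0_card : #|P0| = 2.
Proof. by rewrite cards2 AW_neq. Qed.


Section RS.
Local Open Scope ring_scope.


Lemma part1 (T : finType) (e : rel T) :
  simple_connected_graph e -> (2 <= mindeg e)%N -> ((TC2 e)%:Z <= tc2_bound e).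
Proof.
move=> [sym [irr _]] Hd.
have [Hmin [v Hv]] := @mindeg_facts _ _ irr Hd.
have Hmax : forall u, (deg e u <= maxdeg e)%N by move=> u; exact: leq_bigmax.
have K : (TC2 e <= maxn (maxdeg e) ((mindeg e)./2 * maxdeg e + mindeg e - 4 * (mindeg e)./2))%N.
  apply/bigmax_leqP => P /andP [Hpart /forall_inP Hco].
  have tP : trivIset P by case/and3P: Hpart.
  pose f S := if [pick W in P | (W != S) && total2coal e S W] is Some W then W else S.
  have Hf : forall S, S \in P -> [/\ f S \in P, f S != S & total2coal e S (f S)].
    move=> S SP; rewrite /f; case: pickP => [W /andP [WP /andP [WS Hc]] | none].
      by [].
    have := Hco S SP => /exists_inP [W WP H]; have := none W; by rewrite WP H.
  apply: (@abstract_bound T _ P f (fun u S => #|nbhd e u :&: S|) v).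
  - move=> u; apply: (leq_trans _ (Hmax u)); exact: sum_cap_le.
  - by rewrite -Hv; exact: sum_cap_le _ _ tP.
  - by move=> S SP; case: (Hf S SP).
  - move=> S u SP; have [_ _ Hc] := Hf S SP.
    move: Hc => /and4P [_ _ _ /forallP /(_ u)]; rewrite setIUr => h.
    apply: leq_trans h _; rewrite cardsU; exact: leq_subr.
  - move=> S SP; have [_ _ /and4P [_ H _ _]] := Hf S SP.
    move/forallPn: H => [u]; rewrite -ltnNge ltnS => h; by exists u.
  - exact: Hd.
  - by rewrite -Hv.
rewrite /tc2_bound le_max.
move: K; rewrite leq_max.
case: (leqP (TC2 e) (maxdeg e)) => [h _|h].
  by apply/orP; left; rewrite lez_nat.
rewrite orbC => /= h2; apply/orP; right. lia.
Qed.


Lemma part2 : exists (T : finType) (e : rel T),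
      [/\ simple_connected_graph e, (2 <= mindeg e)%N &
          (TC2 e)%:Z = tc2_bound e].
Proof.
exists ('I_3 : finType), eK3; split.
- exact: K3_graph.
- by rewrite K3_mindeg.
have h : (#|P0| <= TC2 eK3)%N by apply: leq_bigmax_cond; exact: P0_ok.
rewrite P0_card in h.
apply/eqP; rewrite eq_le; apply/andP; split.
  by apply: part1; [exact: K3_graph | rewrite K3_mindeg].
rewrite /tc2_bound K3_mindeg K3_maxdeg ge_max /=; apply/andP; split.
  by rewrite lez_nat; exact: h.
have -> : (1 * (2 - 4) + 2 : int) = 0%:Z by [].
by rewrite lez_nat.
Qed.

End RS.

Local Open Scope ring_scope.

Theorem theorem3p5 :
  (forall (T : finType) (e : rel T),
      simple_connected_graph e -> (2 <= mindeg e)%N ->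
      ((TC2 e)%:Z <= tc2_bound e))
  /\
  (exists (T : finType) (e : rel T),
      [/\ simple_connected_graph e, (2 <= mindeg e)%N &
          (TC2 e)%:Z = tc2_bound e]).
Proof.
split; [exact: part1 | exact: part2].
Qed.
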